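(* Let $q$ be a prime power, $\eta\ge0$ an integer, $(\delta_T,\delta_X)\in\mathbb{Z}\times\mathbb{N}$ with $\delta=\delta_T+\eta\delta_X\ge0$. Let $M=T_1^{c_1}T_2^{c_2}X_1^{d_1}X_2^{d_2}$ and $M'=T_1^{c'_1}T_2^{c'_2}X_1^{d'_1}X_2^{d'_2}$ be two monomials of bidegree $(\delta_T,\delta_X)$. Then $\mathrm{ev}_{(\delta_T,\delta_X)}(M)=\mathrm{ev}_{(\delta_T,\delta_X)}(M')$ if and only if, for all $i,j\in\{1,2\}$: $q-1$ divides $d_i-d'_i$; $q-1$ divides $c_j-c'_j$; $d_i=0\Leftrightarrow d'_i=0$; and $c_j=0\Leftrightarrow c'_j=0$.
   Context: $R=\mathbb{F}_q[T_1,T_2,X_1,X_2]$; the bidegree of $T_1^{c_1}T_2^{c_2}X_1^{d_1}X_2^{d_2}$ is $(c_1+c_2-\eta d_1,d_1+d_2)$; $R(\delta_T,\delta_X)$ is the span of monomials of bidegree $(\delta_T,\delta_X)$. The Hirzebruch surface $\mathcal{H}_\eta$ is the quotient of $(\mathbb{A}^2\setminus\{0\})^2$ by $\mathbb{G}_m^2$ acting by $(\lambda,\mu)\cdot(t_1,t_2,x_1,x_2)=(\lambda t_1,\lambda t_2,\mu\lambda^{-\eta}x_1,\mu x_2)$; each of its $(q+1)^2$ $\mathbb{F}_q$-points $P$ has a unique representative of the form $(1,a,1,b)$, $(0,1,1,b)$, $(1,a,0,1)$ or $(0,1,0,1)$ ($a,b\in\mathbb{F}_q$), and $F(P)$ is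 $F$ evaluated there. $\mathrm{ev}_{(\delta_T,\delta_X)}(F)=(F(P))_{P\in\mathcal{H}_\eta(\mathbb{F}_q)}$. *)

(* Defs.v *)
From HB Require Import structures.
From mathcomp Require Import all_boot all_order all_algebra all_field.
Set Implicit Arguments. Unset Strict Implicit. Unset Printing Implicit Defensive.
Import Order.TTheory GRing.Theory Num.Theory.
Local Open Scope ring_scope.

(* A monomial T1^c1 T2^c2 X1^d1 X2^d2 of R = F_q[T1,T2,X1,X2] is identified
   with its exponent vector (c1,c2,d1,d2). *)

Definition bideg (eta c1 c2 d1 d2 : nat) : int * nat :=
  ((c1 + c2)%:Z - (eta * d1)%:Z, (d1 + d2)%N).

(* F_q-points of the Hirzebruch surface, via their normalized representatives:
   first component  Some a -> (t1,t2) = (1,a),  None -> (t1,t2) = (0,1);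
   second component Some b -> (x1,x2) = (1,b),  None -> (x1,x2) = (0,1). *)
Definition hpoint (F : finFieldType) : finType := (option F * option F)%type.

Definition repT (F : finFieldType) (o : option F) : F * F :=
  if o is Some a then (1, a) else (0, 1).
Definition repX (F : finFieldType) (o : option F) : F * F :=
  if o is Some b then (1, b) else (0, 1).

(* Value of the monomial at the normalized representative of P
   (with the usual convention 0^0 = 1). *)
Definition mono_at (F : finFieldType) (c1 c2 d1 d2 : nat) (P : hpoint F) : F :=
  let t := repT P.1 in let x := repX P.2 in
  t.1 ^+ c1 * t.2 ^+ c2 * x.1 ^+ d1 * x.2 ^+ d2.

Definition ev_mono (F : finFieldType) (c1 c2 d1 d2 : nat) : {ffun hpoint F -> F} :=
  [ffun P => mono_at c1 c2 d1 d2 P].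

(* Main.v *)
Require Import Defs.
From HB Require Import structures.
From mathcomp Require Import all_boot all_order all_algebra all_field.
From mathcomp Require Import cyclic.
From mathcomp Require Import zify.
Import Order.TTheory GRing.Theory Num.Theory.
Local Open Scope ring_scope.

Lemma prim_exists (F : finFieldType) :
  exists z : F, (#|F|.-1).-primitive_root z.
Proof.
set N := #|F|.-1.
have cardF : #|F| = N.+1 by rewrite /N prednK // (ltn_trans _ (finNzRing_gt1 F)).
have unity x : x != 0 -> x ^+ N = 1 :> F.
  move=> nx; have := expf_card x; rewrite cardF exprS.
  by move=> H; apply: (mulfI nx); rewrite mulr1.
have NP : (0 < N)%N by rewrite /N -subn1 subn_gt0 finNzRing_gt1.
have /hasP[z _ Hz] : has N.-primitive_root (enum (predC1 (0:F))).
  apply: has_prim_root NP _ (enum_uniq _) _.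
  - apply/allP => x; rewrite mem_enum /= => nx.
    by rewrite unity_rootE unity.
  - by rewrite -cardE cardC1.
by exists z.
Qed.

Lemma unityF (F : finFieldType) (x : F) : x != 0 -> x ^+ #|F|.-1 = 1.
Proof.
move=> nx; have := expf_card x.
rewrite -{1}(prednK (ltn_trans _ (finNzRing_gt1 F))) // exprS.
by move=> H; apply: (mulfI nx); rewrite mulr1.
Qed.

Lemma Nmod (N i j : nat) : (i == j %[mod N])%N = ((N%:Z %| i%:Z - j%:Z)%Z).
Proof. by rewrite -eqz_mod_dvd /= !modz_nat eqz_nat. Qed.

Lemma pow_all_eq (F : finFieldType) (n m : nat) :
  (forall a : F, a ^+ n = a ^+ m) <->
  (((#|F| - 1)%:Z %| n%:Z - m%:Z)%Z /\ (n == 0%N) = (m == 0%N)).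
Proof.
split.
- move=> H; split.
  + have [z Hz] := prim_exists F.
    by rewrite subn1 -Nmod -(eq_prim_root_expr Hz) H.
  + have := H 0; rewrite !expr0n.
    by case: (n == 0%N); case: (m == 0%N) => //= /eqP; rewrite ?oner_eq0 // eq_sym oner_eq0.
- move=> [Hd Hz] a; case: (eqVneq a 0) => [->|na]; first by rewrite !expr0n Hz.
  rewrite subn1 -Nmod in Hd.
  rewrite (divn_eq n #|F|.-1) (divn_eq m #|F|.-1) -(eqP Hd) !exprD.
  by rewrite !(mulnC _ #|F|.-1) !exprM unityF // !expr1n.
Qed.

Lemma zero_pow (F : finFieldType) (n m : nat) :
  (0 : F) ^+ n = 0 ^+ m -> (n == 0%N) = (m == 0%N).
Proof.
rewrite !expr0n.
by case: (n == 0%N); case: (m == 0%N) => //= /eqP; rewrite ?oner_eq0 // eq_sym oner_eq0.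
Qed.

Theorem proposition2p7 (F : finFieldType) (eta : nat) (dT : int) (dX : nat)
    (c1 c2 d1 d2 c1' c2' d1' d2' : nat) :
  0 <= dT + (eta * dX)%:Z ->
  bideg eta c1 c2 d1 d2 = (dT, dX) ->
  bideg eta c1' c2' d1' d2' = (dT, dX) ->
  (ev_mono F c1 c2 d1 d2 = ev_mono F c1' c2' d1' d2' <->
   [/\ (((#|F| - 1)%:Z %| d1%:Z - d1'%:Z)%Z /\ ((#|F| - 1)%:Z %| d2%:Z - d2'%:Z)%Z),
       (((#|F| - 1)%:Z %| c1%:Z - c1'%:Z)%Z /\ ((#|F| - 1)%:Z %| c2%:Z - c2'%:Z)%Z),
       ((d1 == 0%N) = (d1' == 0%N) /\ (d2 == 0%N) = (d2' == 0%N)) &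
       ((c1 == 0%N) = (c1' == 0%N) /\ (c2 == 0%N) = (c2' == 0%N))]).
Proof.
rewrite /bideg => _ [E1 E2] [E1' E2'].
have key : ev_mono F c1 c2 d1 d2 = ev_mono F c1' c2' d1' d2' <->
    forall P : hpoint F, mono_at c1 c2 d1 d2 P = mono_at c1' c2' d1' d2' P.
  split=> [E P | H]; last by apply/ffunP => P; rewrite /ev_mono !ffunE H.
  by have := congr1 (fun f : {ffun hpoint F -> F} => f P) E; rewrite /ev_mono !ffunE.
rewrite key; split.
- move=> H.
  have hc2 : forall a : F, a ^+ c2 = a ^+ c2'.
    by move=> a; have := H (Some a, Some 1); rewrite /mono_at /= !expr1n !mul1r !mulr1.
  have hd2 : forall a : F, a ^+ d2 = a ^+ d2'.
    by move=> a; have := H (Some 1, Some a); rewrite /mono_at /= !expr1n !mul1r.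
  have Zc1 : (c1 == 0%N) = (c1' == 0%N).
    by apply: (@zero_pow F); have := H (None, Some 1); rewrite /mono_at /= !expr1n !mulr1.
  have Zd1 : (d1 == 0%N) = (d1' == 0%N).
    by apply: (@zero_pow F); have := H (Some 1, None); rewrite /mono_at /= !expr1n !mulr1 !mul1r.
  have [Dc2 Zc2] := iffLR (pow_all_eq F c2 c2') hc2.
  have [Dd2 Zd2] := iffLR (pow_all_eq F d2 d2') hd2.
  have ed1 : (d1%:Z - d1'%:Z = - (d2%:Z - d2'%:Z))%R by lia.
  have ec1 : (c1%:Z - c1'%:Z = - (c2%:Z - c2'%:Z) + eta%:Z * (d1%:Z - d1'%:Z))%R by lia.
  have Dd1 : ((#|F| - 1)%:Z %| d1%:Z - d1'%:Z)%Z by rewrite ed1 rpredN.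
  split => //.
  split => //.
  by rewrite ec1 rpredD ?rpredN ?dvdz_mull.
- move=> [[Dd1 Dd2] [Dc1 Dc2] [Zd1 Zd2] [Zc1 Zc2]] P.
  have h1 := iffRL (pow_all_eq F c1 c1') (conj Dc1 Zc1).
  have h2 := iffRL (pow_all_eq F c2 c2') (conj Dc2 Zc2).
  have h3 := iffRL (pow_all_eq F d1 d1') (conj Dd1 Zd1).
  have h4 := iffRL (pow_all_eq F d2 d2') (conj Dd2 Zd2).
  by rewrite /mono_at h1 h2 h3 h4.
Qed.
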